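(* Let $n\ge1$ and $p$ a prime. The radical $\mathcal{R}(n,p)$ of the $p$-modular descent algebra $\Sigma(n,p)$ is contained in the kernel of the homomorphism $\phi:\Sigma(n,p)\to G(n,p)$.
   Context: A composition of $n$ is a sequence of positive integers with sum $n$. The descent algebra $\Sigma_n$ has basis $\{B_q\}$ indexed by compositions of $n$ with multiplication $B_qB_r=\sum_{Z\in S(q,r)}B_{c(Z)}$, where for $q=[a_1,\dots,a_s]$, $r=[b_1,\dots,b_t]$, $S(q,r)$ is the set of $s\times t$ non-negative integer matrices with row sums $a_i$ and column sums $b_j$, and $c(Z)$ is the composition obtained by reading the entries of $Z$ row by row and omitting zeros. Let $\mathcal{Z}_n$ be the subring of integral combinations of the $B_q$ and $\Sigma(n,p)=\mathcal{Z}_n/p\mathcal{Z}_n$, an $\mathbb{F}_p$-algebra with basis $\overline{B}_q$ (images of $B_q$); $\mathcal{R}(n,p)$ denotes its (Jacobson) radical. For a composition $q=[a_1,\dots,a_r]$ let $\chi_q$ be the permutation character of $S_n$ induced from the trivial character of the Young subgroup $S_{a_1}\times\cdots\times S_{a_r}$, let $G_n$ be the ring (under pointwise operations) of integral combinations of the $\chi_q$, and let $G(n,p)$ be the $\mathbb{F}_p$-algebra obtained by reducing all character values of elements of $G_n$ modulo $p$; write $\tilde\chi_q$ for the reduction of $\chi_q$. The map $\phi:\Sigma(n,p)\to G(n,p)$ is the $\mathbb{F}_p$-linear map with $\phi(\overline{B}_q)=\tilde\chi_q$ for all compositions $q$; it is a surjective homomorphism of $\mathbb{F}_p$-algebras (as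 a consequence of Solomon's theorem that $B_q\mapsto\chi_q$ defines a ring homomorphism $\mathcal{Z}_n\to G_n$). *)

(* Defs.v *)
From HB Require Import structures.
From mathcomp Require Import all_boot all_order all_algebra all_fingroup.
Set Implicit Arguments. Unset Strict Implicit. Unset Printing Implicit Defensive.
Import GRing.Theory.
Local Open Scope ring_scope.

Fixpoint seqs_len (k m : nat) : seq (seq nat) :=
  if k is k'.+1 then [seq a :: s | a <- iota 0 m.+1, s <- seqs_len k' m]
  else [:: [::]].

(* all sequences of length <= n with entries in [0, n]; every composition
   of n is among them *)
Definition allseqs (n : nat) : seq (seq nat) :=
  flatten [seq seqs_len k n | k <- iota 0 n.+1].

Definition is_comp (n : nat) (s : seq nat) : bool :=
  all (fun a => 0 < a)%N s && (sumn s == n).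

Definition comps (n : nat) : seq (seq nat) := filter (is_comp n) (allseqs n).

Definition comp (n : nat) := seq_sub (comps n).

(* Z in S(q,r): non-negative integer matrices (entries are <= n automatically,
   since row sums are parts of q) with row sums a_i and column sums b_j *)
Definition inS (n : nat) (q r : seq nat)
  (Z : 'M['I_n.+1]_(size q, size r)) : bool :=
  [forall i : 'I_(size q), (\sum_(j < size r) val (Z i j))%N == nth 0%N q i] &&
  [forall j : 'I_(size r), (\sum_(i < size q) val (Z i j))%N == nth 0%N r j].

Definition cZ (n : nat) (s t : nat) (Z : 'M['I_n.+1]_(s, t)) : seq nat :=
  filter (fun a => a != 0)%N
    [seq val (Z i j) | i <- enum 'I_s, j <- enum 'I_t].

Definition struct_const (n : nat) (q r c : seq nat) : nat :=
  #|[set Z : 'M['I_n.+1]_(size q, size r) | inS Z & cZ Z == c]|.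

(* elements: F_p-linear combinations of the basis vectors \bar B_q *)
Notation Sig n p := {ffun comp n -> 'F_p}.

Definition Bbar (n p : nat) (q : comp n) : Sig n p :=
  [ffun r => (r == q)%:R].

(* \bar B_q \bar B_r, reduced mod p *)
Definition Bprod (n p : nat) (q r : comp n) : Sig n p :=
  [ffun c : comp n => (struct_const n (ssval q) (ssval r) (ssval c))%:R].

Definition smul (n p : nat) (x y : Sig n p) : Sig n p :=
  [ffun c : comp n =>
     \sum_(q : comp n) \sum_(r : comp n) x q * y r * Bprod p q r c].

Definition left_ideal (n p : nat) (I : {set Sig n p}) : Prop :=
  [/\ 0 \in I,
      forall x y, x \in I -> y \in I -> x + y \in I,
      forall (c : 'F_p) x, x \in I -> [ffun i => c * x i] \in I &
      forall a x, x \in I -> smul a x \in I].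

Definition maximal_left_ideal (n p : nat) (I : {set Sig n p}) : Prop :=
  [/\ left_ideal I, I != setT &
      forall J : {set Sig n p}, left_ideal J -> I \subset J ->
        J = I \/ J = setT].

Definition in_radical (n p : nat) (x : Sig n p) : Prop :=
  forall I : {set Sig n p}, maximal_left_ideal I -> x \in I.

Definition psums (s : seq nat) : seq nat :=
  [seq sumn (take i.+1 s) | i <- iota 0 (size s)].

(* index of the block of {0,...,n-1} containing k *)
Definition blk (s : seq nat) (k : nat) : nat := find (fun m => k < m)%N (psums s).

Definition Young (n : nat) (s : seq nat) : {set 'S_n} :=
  [set g : 'S_n | [forall k : 'I_n, blk s (g k) == blk s k]].

(* chi_q(g) = permutation character of S_n on the cosets of the Young
   subgroup (= induced character of the trivial character) *)
Definition chi (n : nat) (q : comp n) (g : 'S_n) : nat :=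
  #|[set C in rcosets (Young n (ssval q)) [set: 'S_n] | (C :* g)%g == C]|.

(* x in ker phi : phi(x) = sum_q x_q chi~_q is the zero function mod p *)
Definition in_ker_phi (n p : nat) (x : Sig n p) : Prop :=
  forall g : 'S_n, \sum_(q : comp n) x q * (chi q g)%:R = 0 :> 'F_p.

(* Main.v *)
Require Import Defs.
From mathcomp Require Import all_boot all_order all_algebra all_fingroup.
Set Implicit Arguments. Unset Strict Implicit. Unset Printing Implicit Defensive.

Lemma seqs_lenP k m s : size s = k -> all (fun a => a <= m) s -> s \in seqs_len k m.
Proof.
elim: k s => [|k IH] [|a s] // [Hs] /andP[Ha Hall].
apply/allpairsP; exists (a, s); split.
- by rewrite mem_iota add0n ltnS.
- exact: IH.
- by [].
Qed.

Lemma sumn_ge s x : x \in s -> x <= sumn s.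
Proof.
elim: s => //= a s IH; rewrite inE => /orP[/eqP->|/IH H]; first exact: leq_addr.
exact: leq_trans H (leq_addl _ _).
Qed.

Lemma size_le_sumn s : all (fun a => 0 < a) s -> size s <= sumn s.
Proof. elim: s => //= a s IH /andP[Ha /IH H]; by rewrite -add1n leq_add. Qed.

Lemma is_comp_mem n s : is_comp n s -> s \in comps n.
Proof.
move=> H; rewrite mem_filter H /=; move/andP: H => [Hpos /eqP Hs].
apply/flattenP; exists (seqs_len (size s) n).
  apply/mapP; exists (size s) => //; rewrite mem_iota /= add0n ltnS -Hs.
  exact: size_le_sumn.
apply: seqs_lenP => //; apply/allP => x Hx; rewrite -Hs; exact: sumn_ge.
Qed.

Lemma comp_is n (q : Defs.comp n) : is_comp n (ssval q).
Proof. by have := ssvalP q; rewrite mem_filter => /andP[]. Qed.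

Lemma psums_cons x s : psums (x :: s) = x :: map (addn x) (psums s).
Proof.
rewrite /psums /= -add1n iotaDl -map_comp /= take0 addn0; congr (_ :: _).
by rewrite -map_comp; apply: eq_map => j.
Qed.

Lemma blk_cons x s m : blk (x :: s) m = if m < x then 0 else (blk s (m - x)).+1.
Proof.
rewrite /blk psums_cons /=; case: ifP => // Hm; congr S.
rewrite find_map; apply: eq_find => t /=.
by rewrite ltn_subLR // leqNgt Hm.
Qed.

Lemma blk_count s i : count (fun m => blk s m == i) (iota 0 (sumn s)) = nth 0 s i.
Proof.
elim: s i => [|x s IH] i /=; first by rewrite nth_nil.
rewrite iotaD count_cat add0n.
have -> : iota x (sumn s) = map (addn x) (iota 0 (sumn s)) by rewrite -iotaDl addn0.
rewrite count_map.
rewrite (eq_in_count (a2 := fun=> i == 0)); last first.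
  by move=> m; rewrite mem_iota /= add0n => Hm; rewrite blk_cons Hm eq_sym.
rewrite (eq_count (a2 := fun m => (i != 0) && (blk s m == i.-1))); last first.
  move=> m /=; rewrite blk_cons ltnNge leq_addr /= addKn.
  by case: i => //=.
case: i => [|i] /=; first by rewrite count_pred0 addn0 count_predT size_iota.
by rewrite count_pred0 add0n IH.
Qed.

Lemma blk_le s m : blk s m <= size s.
Proof. by rewrite /blk (leq_trans (find_size _ _)) // size_map size_iota. Qed.

Lemma blk_char s i m : i < size s -> sumn (take i s) <= m < sumn (take i s) + nth 0 s i ->
  blk s m = i.
Proof.
elim: s i m => [|x s IH] [|i] m // Hi /andP[H1 H2].
  by rewrite blk_cons; rewrite take0 /= add0n in H2; rewrite H2.
move: H1 H2; rewrite /= => H1 H2.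
rewrite blk_cons ltnNge (leq_trans (leq_addr _ _) H1) /=; congr S.
have Hx : x <= m by exact: leq_trans (leq_addr _ _) H1.
apply: IH => //; rewrite leq_subRL ?H1 ?ltn_subLR ?addnA //.
Qed.

Lemma sumn_take_S s i : i < size s -> sumn (take i.+1 s) = sumn (take i s) + nth 0 s i.
Proof.
elim: s i => [|x s IH] [|i] //=; first by rewrite take0 addn0.
by move=> Hi; rewrite IH // addnA.
Qed.

Lemma sumn_take_le s i : sumn (take i s) <= sumn s.
Proof. by rewrite -{2}(cat_take_drop i s) sumn_cat leq_addr. Qed.

Definition fib n (f : {ffun 'I_n -> 'I_n.+1}) (i : nat) : nat :=
  #|[set k | val (f k) == i]|.

Definition Lam n (s : seq nat) (g : 'S_n) : {set {ffun 'I_n -> 'I_n.+1}} :=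
  [set f : {ffun 'I_n -> 'I_n.+1} | [forall k, f (g k) == f k] && [forall i : 'I_n.+1, fib f i == nth 0 s i]].

Lemma card_count n (P : pred nat) : #|[set k : 'I_n | P (val k)]| = count P (iota 0 n).
Proof. by rewrite -sum1dep_card -(big_mkord P (fun _ => 1)) sum1_count /index_iota subn0. Qed.

Lemma Lam_lt n s (g : 'S_n) f k : f \in Lam s g -> f k < size s.
Proof.
rewrite inE => /andP[_ /forallP /(_ (f k)) /eqP Hf].
rewrite ltnNge; apply/negP => Hge.
move: Hf; rewrite nth_default // /fib => /eqP; rewrite cards_eq0 => /eqP/setP/(_ k).
by rewrite !inE eqxx.
Qed.


Definition Fh n (s : seq nat) (h : 'S_n) : {ffun 'I_n -> 'I_n.+1} :=
  [ffun k => inord (blk s ((h^-1)%g k))].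

Lemma Fh_val n s h k : size s <= n -> val (@Fh n s h k) = blk s ((h^-1)%g k).
Proof. move=> Hs; rewrite ffunE; apply: inordK; by rewrite ltnS (leq_trans (blk_le _ _)). Qed.

Lemma Fh_mulY n s (y h : 'S_n) : y \in Young n s -> Fh s (y * h)%g = Fh s h.
Proof.
rewrite inE => /forallP Hy; apply/ffunP => k; rewrite !ffunE invMg permM.
congr inord; have := eqP (Hy ((y^-1)%g ((h^-1)%g k))); rewrite permKV => ->//.
Qed.

Lemma Fh_mulg n s (h g : 'S_n) k : Fh s (h * g)%g k = Fh s h ((g^-1)%g k).
Proof. by rewrite !ffunE invMg permM. Qed.

Lemma Fh_sub n s (h h' : 'S_n) : size s <= n -> Fh s h = Fh s h' ->
  (Young n s :* h \subset Young n s :* h')%g.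
Proof.
move=> Hs E; apply/subsetP => z; rewrite !mem_rcoset !inE => /forallP Hz.
apply/forallP => k; rewrite permM.
move/ffunP/(_ (z k))/(congr1 val): E; rewrite !Fh_val // => <-.
by have := Hz k; rewrite permM.
Qed.

Lemma Fh_inj n s (h h' : 'S_n) : size s <= n -> Fh s h = Fh s h' ->
  (Young n s :* h = Young n s :* h')%g.
Proof. by move=> Hs E; apply/eqP; rewrite eqEsubset !Fh_sub. Qed.

Lemma one_Young n s : (1%g : 'S_n) \in Young n s.
Proof. by rewrite inE; apply/forallP => k; rewrite perm1. Qed.

Lemma Fh_repr n s (h : 'S_n) : Fh s (repr (Young n s :* h)%g) = Fh s h.
Proof.
have : h \in (Young n s :* h)%g by rewrite mem_rcoset mulgV one_Young.
move/mem_repr; set z := repr _; rewrite mem_rcoset => Hz.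
by rewrite -(mulgKV h z) Fh_mulY.
Qed.

Lemma fib_Fh n s (h : 'S_n) i : is_comp n s -> fib (Fh s h) i = nth 0 s i.
Proof.
move=> Hc; have Hs : size s <= n.
  by case/andP: Hc => Hp /eqP <-; apply: size_le_sumn.
rewrite /fib.
have -> : [set k | val (Fh s h k) == i] = [set k | blk s ((h^-1)%g k) == i].
  by apply/setP => k; rewrite !inE Fh_val.
rewrite -sum1dep_card.
rewrite (reindex_inj (@perm_inj _ h)) /=.
rewrite (eq_bigl (fun m : 'I_n => blk s m == i)); last by move=> m; rewrite permK.
rewrite sum1dep_card (@card_count _ (fun m => blk s m == i)); case/andP: Hc => _ /eqP <-.
exact: blk_count.
Qed.

Definition rk n (f : {ffun 'I_n -> 'I_n.+1}) (k : 'I_n) : nat :=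
  #|[set k' : 'I_n | (k' < k) && (f k' == f k)]|.

Definition sg n (s : seq nat) (f : {ffun 'I_n -> 'I_n.+1}) (k : 'I_n) : nat :=
  sumn (take (f k) s) + rk f k.



Lemma rk_lt n s (g : 'S_n) f k : f \in Lam s g -> rk f k < nth 0 s (f k).
Proof.
move=> Hf.
have -> : nth 0 s (f k) = fib f (f k).
  by move: Hf; rewrite inE => /andP[_ /forallP /(_ (f k)) /eqP].
apply: proper_card; apply/properP; split.
  by apply/subsetP => k'; rewrite !inE => /andP[_ /eqP ->].
by exists k; rewrite !inE ?ltnn ?eqxx.
Qed.

Lemma sg_blk n s (g : 'S_n) f k : f \in Lam s g -> blk s (sg s f k) = f k.
Proof.
move=> Hf; apply: blk_char; first exact: Lam_lt Hf.
by rewrite /sg leq_addr /= ltn_add2l (rk_lt k Hf).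
Qed.

Lemma sg_lt n s (g : 'S_n) f k : is_comp n s -> f \in Lam s g -> sg s f k < n.
Proof.
move=> /andP[_ /eqP Hs] Hf.
apply: (@leq_trans (sumn (take (f k).+1 s))); last by rewrite -[X in _ <= X]Hs sumn_take_le.
by rewrite sumn_take_S ?(Lam_lt k Hf) // /sg ltn_add2l (rk_lt k Hf).
Qed.

Definition sgo n s (f : {ffun 'I_n -> 'I_n.+1}) (k : 'I_n) : 'I_n := insubd k (sg s f k).

Lemma sgo_val n s (g : 'S_n) f k : is_comp n s -> f \in Lam s g -> val (sgo s f k) = sg s f k.
Proof. by move=> Hc Hf; rewrite val_insubd (sg_lt k Hc Hf). Qed.

Lemma rk_mono n (f : {ffun 'I_n -> 'I_n.+1}) (k1 k2 : 'I_n) : k1 < k2 -> f k1 = f k2 -> rk f k1 < rk f k2.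
Proof.
move=> Hlt Heq; apply: proper_card; apply/properP; split.
  apply/subsetP => k'; rewrite !inE => /andP[H1 /eqP H2].
  by rewrite (ltn_trans H1 Hlt) H2 Heq eqxx.
by exists k1; rewrite !inE ?ltnn ?Hlt ?Heq ?eqxx.
Qed.

Lemma sgo_inj n s (g : 'S_n) f : is_comp n s -> f \in Lam s g -> injective (sgo s f).
Proof.
move=> Hc Hf k1 k2 /(congr1 val); rewrite !(sgo_val _ Hc Hf) => E.
have Ef : f k1 = f k2 by apply: val_inj => /=; rewrite -(sg_blk k1 Hf) -(sg_blk k2 Hf) E.
move: E; rewrite /sg Ef => /addnI E.
case: (ltngtP k1 k2) => H; last by apply: val_inj.
  by move: (rk_mono H Ef); rewrite E ltnn.
by move: (rk_mono H (esym Ef)); rewrite E ltnn.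
Qed.

Definition sgp n s (g : 'S_n) (f : {ffun 'I_n -> 'I_n.+1}) (Hc : is_comp n s)
  (Hf : f \in Lam s g) : 'S_n := perm (sgo_inj Hc Hf).

Lemma chi_Lam n (q : Defs.comp n) (g : 'S_n) : chi q g = #|Lam (ssval q) g|.
Proof.
set s := ssval q; have Hc : is_comp n s := comp_is q.
have Hs : size s <= n by case/andP: Hc => Hp /eqP <-; apply: size_le_sumn.
set Y := Young n s.
set Om := [set C in rcosets Y [set: 'S_n] | (C :* g)%g == C].
rewrite /chi -/s -/Y -/Om.
apply/eqP; rewrite eqn_leq; apply/andP; split.
-
  have inj : {in Om &, injective (fun C => Fh s (repr C))}.
    move=> C C'; rewrite !inE => /andP[/rcosetsP[h _ ->] _] /andP[/rcosetsP[h' _ ->] _].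
    by rewrite !Fh_repr; apply: Fh_inj.
  rewrite -(card_in_imset inj); apply: subset_leq_card; apply/subsetP => F.
  case/imsetP => C; rewrite inE => /andP[/rcosetsP[h _ ->] /eqP HC] ->.
  rewrite Fh_repr inE; apply/andP; split.
    apply/forallP => k; apply/eqP.
    have E : Fh s (h * g)%g = Fh s h.
      by rewrite -(@Fh_repr _ s (h * g)%g) rcosetM HC Fh_repr.

    by rewrite -{1}E Fh_mulg permK.
  by apply/forallP => i; rewrite fib_Fh.
-
  apply: leq_trans (leq_imset_card (fun C => Fh s (repr C)) Om).
  apply: subset_leq_card; apply/subsetP => f Hf; apply/imsetP.
  set h := ((sgp Hc Hf)^-1)%g.
  have Fhh : Fh s h = f.
    apply/ffunP => k; apply: val_inj; rewrite Fh_val // invgK.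
    by rewrite /sgp permE (sgo_val _ Hc Hf) (sg_blk k Hf).
  exists (Y :* h)%g; last by rewrite /Y Fh_repr Fhh.
  rewrite inE; apply/andP; split; first by apply/rcosetsP; exists h; rewrite ?inE.
  rewrite -rcosetM; apply/eqP; apply: Fh_inj => //.
  apply/ffunP => k; rewrite Fh_mulg Fhh.
  have := Hf; rewrite inE => /andP[/forallP /(_ ((g^-1)%g k)) /eqP + _].
  by rewrite permKV.
Qed.

Definition cnt n (f1 f2 : {ffun 'I_n -> 'I_n.+1}) (a b : nat) : nat :=
  #|[set k | (val (f1 k) == a) && (val (f2 k) == b)]|.

Definition Zof n (q r : seq nat) (f1 f2 : {ffun 'I_n -> 'I_n.+1}) : 'M['I_n.+1]_(size q, size r) :=
  \matrix_(i < size q, j < size r) inord (cnt f1 f2 i j).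

Lemma cnt_le n (f1 f2 : {ffun 'I_n -> 'I_n.+1}) a b : cnt f1 f2 a b <= n.
Proof. by rewrite /cnt (leq_trans (max_card _)) ?card_ord. Qed.

Lemma Zof_val n q r (f1 f2 : {ffun 'I_n -> 'I_n.+1}) i j :
  val (Zof q r f1 f2 i j) = cnt f1 f2 i j.
Proof. by rewrite mxE /= inordK // ltnS cnt_le. Qed.

Lemma row_part n (P : pred 'I_n) (F : {ffun 'I_n -> 'I_n.+1}) m :
  (forall k, F k < m) ->
  \sum_(j < m) #|[set k | P k && (val (F k) == j)]| = #|[set k | P k]|.
Proof.
move=> HF.
rewrite (eq_bigr (fun j : 'I_m => \sum_k (if P k && (val (F k) == j) then 1 else 0))); last first.
  by move=> j _; rewrite -sum1dep_card big_mkcond.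
rewrite -sum1dep_card exchange_big [in RHS]big_mkcond /=; apply: eq_bigr => k _.
case: (P k) => /=; last by rewrite big1.
rewrite (bigD1 (Ordinal (HF k))) //= eqxx big1 ?addn0 // => j Hj.
case: eqP => // E; case/eqP: Hj; exact: val_inj.
Qed.

Lemma fib_eq n s (g : 'S_n) f (a : nat) : f \in Lam s g -> a < n.+1 -> fib f a = nth 0 s a.
Proof. by move=> Hf Ha; move: Hf; rewrite inE => /andP[_ /forallP /(_ (Ordinal Ha)) /eqP]. Qed.

Lemma comp_size n s : is_comp n s -> size s <= n.
Proof. by case/andP => Hp /eqP <-; apply: size_le_sumn. Qed.

Lemma fib_row n r (g : 'S_n) f1 f2 a : f2 \in Lam r g ->
  \sum_(j < size r) cnt f1 f2 a j = fib f1 a.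
Proof.
move=> H2; rewrite /fib -(@row_part _ (fun k => val (f1 k) == a) f2 (size r)) //.
by move=> k; exact: Lam_lt H2.
Qed.

Lemma fib_col n q (g : 'S_n) f1 f2 b : f1 \in Lam q g ->
  \sum_(i < size q) cnt f1 f2 i b = fib f2 b.
Proof.
move=> H1; rewrite /fib -(@row_part _ (fun k => val (f2 k) == b) f1 (size q)).
  by apply: eq_bigr => i _; rewrite /cnt; apply: eq_card => k; rewrite !inE andbC.
by move=> k; exact: Lam_lt H1.
Qed.

Lemma Zof_inS n q r (g : 'S_n) f1 f2 : is_comp n q -> is_comp n r ->
  f1 \in Lam q g -> f2 \in Lam r g -> inS (Zof q r f1 f2).
Proof.
move=> Hq Hr H1 H2; apply/andP; split; apply/forallP => i.
  under eq_bigr => j _ do rewrite Zof_val.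
  rewrite (fib_row _ _ H2) (fib_eq H1) //.
  by rewrite ltnS (leq_trans (ltnW (ltn_ord i)) (comp_size Hq)).
under eq_bigr => j _ do rewrite Zof_val.
rewrite (fib_col _ _ H1) (fib_eq H2) //.
by rewrite ltnS (leq_trans (ltnW (ltn_ord i)) (comp_size Hr)).
Qed.

Lemma lamC n q r (g : 'S_n) : is_comp n q -> is_comp n r ->
  #|Lam q g| * #|Lam r g| =
  \sum_(Z : 'M['I_n.+1]_(size q, size r) | inS Z)
     #|[set x in setX (Lam q g) (Lam r g) | Zof q r x.1 x.2 == Z]|.
Proof.
move=> Hq Hr; rewrite -cardsX -sum1_card.
rewrite (partition_big (fun x => Zof q r x.1 x.2) (@inS n q r)); last first.
  by move=> [x1 x2]; rewrite in_setX => /andP[H1 H2]; exact: (Zof_inS Hq Hr H1 H2).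
apply: eq_bigr => Z _; rewrite -sum1_card; apply: eq_bigl => x; rewrite !inE.
by [].
Qed.

Definition Lc n (q r : seq nat) (Z : 'M['I_n.+1]_(size q, size r)) : seq ('I_(size q) * 'I_(size r)) :=
  [seq c <- [seq (i, j) | i <- enum 'I_(size q), j <- enum 'I_(size r)] | val (Z c.1 c.2) != 0].

Definition pv a b (c : 'I_a * 'I_b) : nat * nat := (val c.1, val c.2).

Definition Ln n (q r : seq nat) (Z : 'M['I_n.+1]_(size q, size r)) : seq (nat * nat) := map (@pv _ _) (Lc Z).

Lemma pv_inj a b : injective (@pv a b).
Proof. by move=> [x1 y1] [x2 y2] [/val_inj -> /val_inj ->]. Qed.

Lemma cZ_Lc n (q r : seq nat) (Z : 'M['I_n.+1]_(size q, size r)) :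
  cZ Z = map (fun c => val (Z c.1 c.2)) (Lc Z).
Proof.
rewrite /cZ /Lc -(map_allpairs (fun c : 'I_(size q) * 'I_(size r) => val (Z c.1 c.2)) pair).
by rewrite filter_map.
Qed.

Lemma uniq_Lc n (q r : seq nat) (Z : 'M['I_n.+1]_(size q, size r)) : uniq (Lc Z).
Proof.
apply: filter_uniq; apply: allpairs_uniq; rewrite ?enum_uniq //.
by move=> [? ?] [? ?] _ _.
Qed.

Lemma uniq_Ln n (q r : seq nat) (Z : 'M['I_n.+1]_(size q, size r)) : uniq (Ln Z).
Proof. by rewrite /Ln map_inj_uniq ?uniq_Lc //; apply: pv_inj. Qed.

Lemma mem_Lc n (q r : seq nat) (Z : 'M['I_n.+1]_(size q, size r)) i j :
  ((i, j) \in Lc Z) = (val (Z i j) != 0).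
Proof. by rewrite mem_filter /= allpairs_f ?mem_enum ?andbT. Qed.

Lemma sumn_filter0 s : sumn [seq x <- s | x != 0] = sumn s.
Proof. by elim: s => //= x s IH; case: eqP => [->|_] /=; rewrite IH. Qed.

Lemma sumn_cZ n (q r : seq nat) (Z : 'M['I_n.+1]_(size q, size r)) : inS Z -> sumn (cZ Z) = sumn q.
Proof.
case/andP => /forallP Hrow _.
rewrite /cZ sumn_filter0 -(map_allpairs (fun c : 'I_(size q) * 'I_(size r) => val (Z c.1 c.2)) pair).
rewrite sumnE big_map big_allpairs /=.
rewrite (eq_bigr (fun i : 'I_(size q) => nth 0 q i)); last first.
  by move=> i _; rewrite big_enum /= -(eqP (Hrow i)); apply: eq_bigl => j.
rewrite big_enum /= sumnE (big_nth 0) big_mkord; apply: eq_bigl => i.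
by [].
Qed.

Lemma cZ_comp n (q r : seq nat) (Z : 'M['I_n.+1]_(size q, size r)) : is_comp n q -> inS Z -> is_comp n (cZ Z).
Proof.
move=> /andP[_ /eqP Hq] HZ; apply/andP; split; last by rewrite sumn_cZ // Hq.
by rewrite /cZ; apply/allP => x; rewrite mem_filter lt0n => /andP[].
Qed.

Lemma Ln_nth n (q r : seq nat) (Z : 'M['I_n.+1]_(size q, size r)) p :
  p < size (Lc Z) -> exists2 c, c \in Lc Z &
   [/\ nth (0,0) (Ln Z) p = pv c, index c (Lc Z) = p & nth 0 (cZ Z) p = val (Z c.1 c.2)].
Proof.
move=> Hp; have [c0 _] : exists c0 : 'I_(size q) * 'I_(size r), true.
  by move: Hp; case: (Lc Z) => [|c0 l] //; exists c0.
exists (nth c0 (Lc Z) p); first exact: mem_nth.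
split; first by rewrite /Ln (nth_map c0).
  by rewrite index_uniq // uniq_Lc.
by rewrite cZ_Lc (nth_map c0).
Qed.

Lemma Ln_index n (q r : seq nat) (Z : 'M['I_n.+1]_(size q, size r)) c :
  index (pv c) (Ln Z) = index c (Lc Z).
Proof. by rewrite /Ln index_map //; apply: pv_inj. Qed.

Lemma size_Lc_le n (q r : seq nat) (Z : 'M['I_n.+1]_(size q, size r)) :
  is_comp n q -> inS Z -> size (Lc Z) <= n.
Proof.
move=> Hq HZ; have /andP[Hp /eqP Hs] := cZ_comp Hq HZ.
by rewrite -[X in _ <= X]Hs -(size_map (fun c => val (Z c.1 c.2))) -cZ_Lc size_le_sumn.
Qed.

Lemma Lam_of1 n (q r : seq nat) (g : 'S_n) (f1 f2 : {ffun 'I_n -> 'I_n.+1}) :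
  (forall k, f1 (g k) = f1 k) -> (forall k, f1 k < size q) -> (forall k, f2 k < size r) ->
  inS (Zof q r f1 f2) -> f1 \in Lam q g.
Proof.
move=> Hinv H1 H2 /andP[/forallP Hrow _]; rewrite inE; apply/andP; split.
  by apply/forallP => k; rewrite Hinv.
apply/forallP => a; case: (ltnP a (size q)) => Ha.
  have := eqP (Hrow (Ordinal Ha)); under eq_bigr => j _ do rewrite Zof_val.
  move=> /= <-; rewrite /fib -(@row_part _ (fun k => val (f1 k) == a) f2 (size r)) //.
rewrite nth_default // /fib cards_eq0; apply/eqP/setP => k; rewrite !inE.
by apply/negP => /eqP E; have := H1 k; rewrite E ltnNge Ha.
Qed.

Lemma Lam_of2 n (q r : seq nat) (g : 'S_n) (f1 f2 : {ffun 'I_n -> 'I_n.+1}) :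
  (forall k, f2 (g k) = f2 k) -> (forall k, f1 k < size q) -> (forall k, f2 k < size r) ->
  inS (Zof q r f1 f2) -> f2 \in Lam r g.
Proof.
move=> Hinv H1 H2 /andP[_ /forallP Hcol]; rewrite inE; apply/andP; split.
  by apply/forallP => k; rewrite Hinv.
apply/forallP => a; case: (ltnP a (size r)) => Ha.
  have := eqP (Hcol (Ordinal Ha)); under eq_bigr => j _ do rewrite Zof_val.
  move=> /= <-; rewrite /fib -(@row_part _ (fun k => val (f2 k) == a) f1 (size q)) //.
  by apply/eqP; apply: eq_bigr => i _; apply: eq_card => k; rewrite !inE andbC.
rewrite nth_default // /fib cards_eq0; apply/eqP/setP => k; rewrite !inE.
by apply/negP => /eqP E; have := H2 k; rewrite E ltnNge Ha.
Qed.

Lemma pair_eq_pv a b (c c' : 'I_a * 'I_b) :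
  (c == c') = (val c.1 == val c'.1) && (val c.2 == val c'.2).
Proof. by rewrite -(inj_eq (@pv_inj a b)) /pv xpair_eqE. Qed.

Lemma idx_eq (T : eqType) (L : seq T) c1 c2 : c1 \in L -> c2 \in L ->
  (index c1 L == index c2 L) = (c1 == c2).
Proof.
move=> H1 H2; apply/eqP/eqP => [E|->] //.
exact: (index_inj c1 H1 H2 E).
Qed.

Lemma Ln_at n (q r : seq nat) (Z : 'M['I_n.+1]_(size q, size r)) c : c \in Lc Z ->
  nth (0,0) (Ln Z) (index c (Lc Z)) = pv c.
Proof. by move=> Hc; rewrite -Ln_index nth_index // /Ln map_f. Qed.

Lemma lamB n q r (g : 'S_n) (Z : 'M['I_n.+1]_(size q, size r)) :
  is_comp n q -> is_comp n r -> inS Z ->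
  #|[set x in setX (Lam q g) (Lam r g) | Zof q r x.1 x.2 == Z]| = #|Lam (cZ Z) g|.
Proof.
move=> Hq Hr HZ.
set A := [set x in setX (Lam q g) (Lam r g) | Zof q r x.1 x.2 == Z].
have HsL := size_Lc_le Hq HZ.
have Hsq := comp_size Hq; have Hsr := comp_size Hr.
have HszcZ : size (cZ Z) = size (Lc Z) by rewrite cZ_Lc size_map.
pose Fw (h : {ffun 'I_n -> 'I_n.+1}) :=
  ([ffun k => inord (nth (0,0) (Ln Z) (h k)).1] : {ffun 'I_n -> 'I_n.+1},
   [ffun k => inord (nth (0,0) (Ln Z) (h k)).2] : {ffun 'I_n -> 'I_n.+1}).
pose Bw (x : {ffun 'I_n -> 'I_n.+1} * {ffun 'I_n -> 'I_n.+1}) : {ffun 'I_n -> 'I_n.+1} :=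
  [ffun k => inord (index (val (x.1 k), val (x.2 k)) (Ln Z))].
have Fpt : forall h k, h \in Lam (cZ Z) g -> exists2 c, c \in Lc Z &
    [/\ val ((Fw h).1 k) = val c.1, val ((Fw h).2 k) = val c.2 & index c (Lc Z) = h k].
  move=> h k Hh; have Hk : h k < size (Lc Z) by rewrite -HszcZ; exact: Lam_lt Hh.
  have [c Hc [E1 E2 E3]] := Ln_nth Hk; exists c => //; rewrite !ffunE E1 /=.
  rewrite !inordK //.
    by rewrite (leq_trans (ltn_ord c.2)) // ltnW // ltnS.
  by rewrite (leq_trans (ltn_ord c.1)) // ltnW // ltnS.
have Bpt : forall x k, x \in A -> exists2 c, c \in Lc Z &
    [/\ val (x.1 k) = val c.1, val (x.2 k) = val c.2 & val (Bw x k) = index c (Lc Z)].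
  move=> [f1 f2] k; rewrite in_set in_setX => /andP[/andP[H1 H2] /eqP HZf] /=.
  set c := (Ordinal (Lam_lt k H1), Ordinal (Lam_lt k H2)).
  have Hc : c \in Lc Z.
    rewrite mem_Lc -HZf Zof_val -lt0n /cnt card_gt0; apply/set0Pn; exists k.
    by rewrite inE /= !eqxx.
  exists c => //; split => //.
  rewrite ffunE /=; have -> : (val (f1 k), val (f2 k)) = pv c by [].
  rewrite Ln_index inordK // ltnS; apply: leq_trans HsL; apply: ltnW; by rewrite index_mem.
have R1 : forall x, x \in A -> Fw (Bw x) = x.
  move=> [f1 f2] Hx; rewrite /Fw; congr pair; apply/ffunP => k; rewrite ffunE.
    have [c Hc [E1 E2 E3]] := Bpt _ k Hx; rewrite /= in E1 E2.
    have -> : (Bw (f1, f2) k : nat) = index c (Lc Z) by [].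
    by rewrite Ln_at //= -E1 inord_val.
  have [c Hc [E1 E2 E3]] := Bpt _ k Hx; rewrite /= in E1 E2.
  have -> : (Bw (f1, f2) k : nat) = index c (Lc Z) by [].
  by rewrite Ln_at //= -E2 inord_val.
have R2 : forall x, x \in A -> Bw x \in Lam (cZ Z) g.
  move=> [f1 f2] Hx; have := Hx; rewrite in_set in_setX => /andP[/andP[H1 H2] /eqP HZf].
  rewrite inE; apply/andP; split.
    apply/forallP => k; rewrite !ffunE /=.
    move: H1 H2; rewrite !inE => /andP[/forallP/(_ k)/eqP -> _] /andP[/forallP/(_ k)/eqP -> _].
    by [].
  apply/forallP => p; apply/eqP; case: (ltnP p (size (Lc Z))) => Hp.
    have [c Hc [_ Ec Ez]] := Ln_nth Hp; rewrite Ez -HZf Zof_val /fib /cnt.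
    apply: eq_card => k; rewrite !inE.
    have [ck Hck [E1 E2 E3]] := Bpt _ k Hx; rewrite /= in E1 E2.
    by rewrite E3 -Ec idx_eq // pair_eq_pv /= E1 E2.
  rewrite nth_default ?HszcZ // /fib; apply/eqP; rewrite cards_eq0; apply/eqP/setP => k; rewrite !inE.
  have [ck Hck [E1 E2 E3]] := Bpt _ k Hx; rewrite E3.
  by apply/negP => /eqP E; move: Hp; rewrite -E leqNgt index_mem Hck.
have R3 : forall h, h \in Lam (cZ Z) g -> Bw (Fw h) = h.
  move=> h Hh; apply/ffunP => k; rewrite ffunE.
  have [c Hc [E1 E2 E3]] := Fpt h k Hh.
  rewrite E1 E2; have -> : (val c.1, val c.2) = pv c by [].
  by rewrite Ln_index E3 inord_val.
have R4 : forall h, h \in Lam (cZ Z) g -> Fw h \in A.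
  move=> h Hh.
  have HZf : Zof q r (Fw h).1 (Fw h).2 = Z.
    apply/matrixP => i j; apply: val_inj; rewrite Zof_val /cnt /=.
    case Hij: ((i, j) \in Lc Z).
      have Hp : index (i, j) (Lc Z) < size (Lc Z) by rewrite index_mem.
      have [c Hc [_ Ec Ez]] := Ln_nth Hp.
      have Ec' : c = (i, j) by exact: (index_inj c Hc Hij Ec).
      have -> : val (Z i j) = nth 0 (cZ Z) (index (i, j) (Lc Z)) by rewrite Ez Ec'.
      rewrite -(fib_eq Hh); last by rewrite ltnS (leq_trans _ HsL) // ltnW.
      apply: eq_card => k; rewrite !inE.
      have [ck Hck [E1 E2 E3]] := Fpt h k Hh.
      rewrite /= in E1 E2; rewrite E1 E2.
      have -> : (val (h k) == index (i, j) (Lc Z)) = (index ck (Lc Z) == index (i, j) (Lc Z)) by rewrite E3.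
      by rewrite idx_eq // pair_eq_pv.
    have -> : val (Z i j) = 0 by apply/eqP; rewrite -[_ == 0]negbK -mem_Lc Hij.
    apply/eqP; rewrite cards_eq0; apply/eqP/setP => k; rewrite !inE.
    have [ck Hck [E1 E2 E3]] := Fpt h k Hh; rewrite E1 E2.
    apply/negP => /andP[/eqP Ei /eqP Ej].
    have : ck = (i, j) by apply/eqP; rewrite pair_eq_pv /= Ei Ej !eqxx.
    by move=> Eck; rewrite -Eck Hck in Hij.
  have Hinv : forall k, h (g k) = h k.
    by move: Hh; rewrite inE => /andP[/forallP Hf _] k; apply/eqP; apply: Hf.
  have B1 : forall k, (Fw h).1 k < size q.
    by move=> k; have [c _ [E1 _ _]] := Fpt h k Hh; have := ltn_ord c.1; rewrite -[nat_of_ord c.1]/(val c.1) -E1.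
  have B2 : forall k, (Fw h).2 k < size r.
    by move=> k; have [c _ [_ E2 _]] := Fpt h k Hh; have := ltn_ord c.2; rewrite -[nat_of_ord c.2]/(val c.2) -E2.
  have HS : inS (Zof q r (Fw h).1 (Fw h).2) by rewrite HZf.
  rewrite in_set in_setX HZf eqxx andbT; apply/andP; split.
    by apply: (Lam_of1 _ B1 B2 HS) => k; rewrite !ffunE Hinv.
  by apply: (Lam_of2 _ B1 B2 HS) => k; rewrite !ffunE Hinv.
apply/eqP; rewrite eqn_leq; apply/andP; split.
  apply: leq_trans (leq_imset_card Fw (Lam (cZ Z) g)).
  apply: subset_leq_card; apply/subsetP => x Hx; apply/imsetP.
  by exists (Bw x); [exact: R2 | rewrite R1].
apply: leq_trans (leq_imset_card Bw A).
apply: subset_leq_card; apply/subsetP => h Hh; apply/imsetP.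
by exists (Fw h); [exact: R4 | rewrite R3].
Qed.

Import GRing.Theory.
Local Open Scope ring_scope.

Local Close Scope ring_scope.
Lemma key n (q r : Defs.comp n) (g : 'S_n) :
  \sum_(c : Defs.comp n) struct_const n (ssval q) (ssval r) (ssval c) * chi c g
  = chi q g * chi r g.
Proof.
have Hq := comp_is q; have Hr := comp_is r.
rewrite !chi_Lam (lamC g Hq Hr).
pose L (s : seq nat) := #|Lam s g|.
rewrite (eq_bigr (fun c : Defs.comp n => \sum_(Z : 'M['I_n.+1]_(size (ssval q), size (ssval r)))
   (if inS Z && (cZ Z == ssval c) then L (cZ Z) else 0))); last first.
  move=> c _; rewrite chi_Lam /struct_const -sum1dep_card big_distrl /= big_mkcond.
  apply: eq_bigr => Z _; case: ifP => // /andP[_ /eqP ->]; by rewrite mul1n.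
rewrite exchange_big /= [in RHS]big_mkcond; apply: eq_bigr => Z _.
case HZ: (inS Z) => /=; last by rewrite big1.
have Hm : cZ Z \in comps n by apply: is_comp_mem; apply: cZ_comp.
rewrite (bigD1 (SeqSub Hm)) //= eqxx big1 ?addn0; first by rewrite lamB.
move=> c Hc; case: eqP => // E; case/eqP: Hc; apply: val_inj => /=; by rewrite E.
Qed.

Local Open Scope ring_scope.
Definition ev n p (g : 'S_n) (x : Sig n p) : 'F_p :=
  \sum_(q : Defs.comp n) x q * (chi q g)%:R.

Lemma ev_mul n p (g : 'S_n) (a x : Sig n p) : ev g (smul a x) = ev g a * ev g x.
Proof.
rewrite /ev /smul.
under eq_bigr => c _ do rewrite ffunE big_distrl /=.
rewrite exchange_big /=.
under eq_bigr => q _ do rewrite (eq_bigr _ (fun c _ => big_distrl _ _ _)) /= exchange_big /=.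
rewrite big_distrl /=; apply: eq_bigr => q _; rewrite big_distrr /=; apply: eq_bigr => r _.
under eq_bigr => c _ do rewrite ffunE -mulrA -natrM.
rewrite -big_distrr /= -natr_sum key natrM.
by rewrite mulrACA.
Qed.

Import GRing.Theory.
Local Open Scope ring_scope.

Lemma ev0 n p (g : 'S_n) : ev g (0 : Sig n p) = 0.
Proof. by rewrite /ev big1 // => q _; rewrite ffunE mul0r. Qed.

Lemma evD n p (g : 'S_n) (x y : Sig n p) : ev g (x + y) = ev g x + ev g y.
Proof. by rewrite /ev -big_split; apply: eq_bigr => q _; rewrite ffunE mulrDl. Qed.

Lemma evZ n p (g : 'S_n) (c : 'F_p) (x : Sig n p) : ev g [ffun i => c * x i] = c * ev g x.
Proof. by rewrite /ev mulr_sumr; apply: eq_bigr => q _; rewrite ffunE mulrA. Qed.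

Lemma ker_left n p (g : 'S_n) : left_ideal [set y : Sig n p | ev g y == 0].
Proof.
split.
- by rewrite inE ev0.
- by move=> x y; rewrite !inE evD => /eqP -> /eqP ->; rewrite addr0.
- by move=> c x; rewrite !inE evZ => /eqP ->; rewrite mulr0.
- by move=> a x; rewrite !inE ev_mul => /eqP ->; rewrite mulr0.
Qed.

Unset Implicit Arguments.
Theorem lemma2p2 (n p : nat) : (1 <= n)%N -> prime p ->
  forall x : Sig n p, in_radical x -> in_ker_phi x.
Proof.
move=> Hn Hp x Hx g; apply/eqP; apply/negPn/negP => Hne.
set I := [set y : Sig n p | ev g y == 0].
have HxI : x \notin I by rewrite inE.
apply: (negP HxI); apply: Hx; split; first exact: ker_left.
  by apply/eqP => E; move: HxI; rewrite E inE.
move=> J [J0 JD JZ JM] HIJ.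
case: (boolP (J \subset I)) => HJI.
  by left; apply/eqP; rewrite eqEsubset HJI HIJ.
right; case/subsetPn: HJI => y HyJ; rewrite inE => Hy.
apply/setP => z; rewrite inE.
set c := ev g z / ev g y.
have Hw : [ffun i => (- c) * y i] \in J by apply: JZ.
have Hw' : [ffun i => c * y i] \in J by apply: JZ.
have Hzw : z + [ffun i => (- c) * y i] \in J.
  apply: (subsetP HIJ); rewrite inE evD evZ /c mulNr divfK ?subrr //.
have -> : z = (z + [ffun i => (- c) * y i]) + [ffun i => c * y i].
  by apply/ffunP => i; rewrite !ffunE mulNr addrNK.
exact: JD.
Qed.
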